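(* Let $\mathcal{X}=(X,\{R_i\}_{i=0}^d)$ be an association scheme with adjacency matrices $A_0,\dots,A_d$, valencies $k_0,\dots,k_d$ and intersection numbers $p_{ij}^k$, and let $W=\sum_{i=0}^dw_iA_i$ and $W'=\sum_{i=0}^dw'_iA_i$ be type-II matrices in its Bose--Mesner algebra. Suppose that $w_0,\dots,w_d$ are pairwise distinct and $w'_0,\dots,w'_d$ are pairwise distinct, that the valencies $k_0,\dots,k_d$ are pairwise distinct, and that $\min\{p_{11}^i\mid 0<i\leq d\}>\frac{|X|}{2}$. If $W$ and $W'$ are equivalent, then $W$ is a scalar multiple of $W'$.
   Context: An association scheme $(X,\{R_i\}_{i=0}^d)$ is a partition of $X\times X$ into relations $R_0=\{(x,x)\}$, $R_1,\dots,R_d$ such that for $(x,y)\in R_k$ the number $p_{ij}^k=|\{z:(x,z)\in R_i,(z,y)\in R_j\}|$ depends only on $i,j,k$ (and each transpose $R_i^\top$ is some $R_j$); $A_i$ is the $(0,1)$-matrix of $R_i$, the Bose--Mesner algebra is the span of the $A_i$, and the valency $k_i$ is the number of $y$ with $(x,y)\in R_i$ for any fixed $x$. A type-II matrix is an $n\times n$ matrix $W$ ($n=|X|$) with nonzero complex entries such that $W(W^{(-)})^\top=nI$, $W^{(-)}$ the entrywise inverse. $W,W'$ are equivalent if there exist invertible diagonal matrices $D,D'$ and permutation matrices $T,T'$ with $DWD'=TW'T'$. *)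

(* Defs.v *)
From mathcomp Require Import all_boot all_order all_algebra all_fingroup.
Set Implicit Arguments. Unset Strict Implicit. Unset Printing Implicit Defensive.
Import GRing.Theory Num.Theory.
Local Open Scope ring_scope.

(* An association scheme on X = 'I_n with classes 0..d is encoded by the
   relation-index function rel : 'I_n -> 'I_n -> 'I_d.+1, where
   (x,y) \in R_i  <->  rel x y = i. *)
Definition pij {n d : nat} (rel : 'I_n -> 'I_n -> 'I_d.+1) (i j : 'I_d.+1)
  (x y : 'I_n) : nat :=
  #|[set z : 'I_n | (rel x z == i) && (rel z y == j)]|.

Definition valency_at {n d : nat} (rel : 'I_n -> 'I_n -> 'I_d.+1) (i : 'I_d.+1)
  (x : 'I_n) : nat := #|[set y : 'I_n | rel x y == i]|.

Definition is_assoc_scheme {n d : nat} (rel : 'I_n -> 'I_n -> 'I_d.+1) : Prop :=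
  (* each R_i is nonempty (it is a partition into d+1 classes) *)
  (forall i : 'I_d.+1, exists x y, rel x y = i) /\
  (forall x y, (rel x y == ord0) = (x == y)) /\
  (forall i : 'I_d.+1, exists j : 'I_d.+1, forall x y, rel x y = i -> rel y x = j) /\
  (forall i j k x y x' y', rel x y = k -> rel x' y' = k ->
      pij rel i j x y = pij rel i j x' y').

Definition adj_mx {C : pzRingType} {n d : nat} (rel : 'I_n -> 'I_n -> 'I_d.+1)
  (i : 'I_d.+1) : 'M[C]_n := \matrix_(x, y) (rel x y == i)%:R.

Definition bm_elt {C : pzRingType} {n d : nat} (rel : 'I_n -> 'I_n -> 'I_d.+1)
  (w : 'I_d.+1 -> C) : 'M[C]_n := \sum_(i < d.+1) w i *: adj_mx rel i.

Definition type_II {C : fieldType} {n : nat} (W : 'M[C]_n) : Prop :=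
  (forall x y, W x y != 0) /\
  W *m (map_mx (fun a => a^-1) W)^T = (n%:R)%:M.

Definition type_II_equiv {C : fieldType} {n : nat} (W W' : 'M[C]_n) : Prop :=
  exists (dl dr : 'rV[C]_n) (s t : 'S_n),
    (forall k, dl 0 k != 0) /\ (forall k, dr 0 k != 0) /\
    diag_mx dl *m W *m diag_mx dr = perm_mx s *m W' *m perm_mx t.

(* Main.v *)
Require Import Defs.
From mathcomp Require Import all_boot all_order all_algebra all_fingroup.
From mathcomp Require Import zify.
Import GRing.Theory Num.Theory.
Local Open Scope ring_scope.

Lemma bm_eltE (C : pzRingType) n d (rel : 'I_n -> 'I_n -> 'I_d.+1)
  (w : 'I_d.+1 -> C) x y : bm_elt rel w x y = w (rel x y).
Proof.
rewrite /bm_elt summxE (bigD1 (rel x y)) //= big1 ?addr0.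
  by rewrite !mxE eqxx mulr1.
by move=> i /negbTE Hi; rewrite !mxE eq_sym Hi mulr0.
Qed.

Section S.
Variables (n d : nat) (rel : 'I_n -> 'I_n -> 'I_d.+1).
Hypothesis As : is_assoc_scheme rel.
Hypothesis Hval : forall (i j : 'I_d.+1) (x : 'I_n), i != j ->
  valency_at rel i x != valency_at rel j x.

Lemma rel_diag x : rel x x = ord0.
Proof. case: As => _ [H _]; by apply/eqP; rewrite H. Qed.

Lemma rel0 x y : (rel x y == ord0) = (x == y).
Proof. by case: As => _ [H _]. Qed.

Lemma transp i : exists j, forall x y, rel x y = i <-> rel y x = j.
Proof.
case: As => Hne [_ [Ht _]].
have [j Hj] := Ht i. exists j => x y; split; first exact: Hj.
have [j' Hj'] := Ht j.
have [x0 [y0 H0]] := Hne i.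
have e : j' = i by rewrite -H0; symmetry; apply: Hj'; apply: Hj.
move=> H; rewrite -e; exact: Hj' _ _ H.
Qed.

Lemma val_const i x x' : valency_at rel i x = valency_at rel i x'.
Proof.
have [j Hj] := transp i.
case: As => _ [_ [_ Hp]].
have E z : valency_at rel i z = pij rel i j z z.
  rewrite /valency_at /pij; apply: eq_card => y; rewrite !inE.
  case: eqP => //= /Hj ->; by rewrite eqxx.
by rewrite !E (Hp i j ord0 x x x' x') ?rel_diag.
Qed.

Lemma cnt i z : valency_at rel i z = (\sum_y (rel z y == i))%N.
Proof.
rewrite /valency_at -sum1_card big_mkcond; apply: eq_bigr => y _.
by rewrite inE; case: eqP.
Qed.

Lemma sum_val i x : (\sum_(x0 : 'I_n) valency_at rel i x0 = n * valency_at rel i x)%N.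
Proof.
rewrite (eq_bigr (fun _ => valency_at rel i x)) => [|x0 _]; last exact: val_const.
by rewrite sum_nat_const cardE size_enum_ord.
Qed.

Lemma rel_sym x y : rel y x = rel x y.
Proof.
have [j Hj] := transp (rel x y).
suff E : j = rel x y by have := proj1 (Hj x y) erefl; rewrite E.
apply/eqP; apply: contraT => Hne.
have tot : (\sum_(x0 : 'I_n) valency_at rel (rel x y) x0
            = \sum_(x0 : 'I_n) valency_at rel j x0)%N.
  rewrite (eq_bigr _ (fun x0 _ => cnt _ x0)) exchange_big /=.
  apply: eq_bigr => y0 _; rewrite cnt; apply: eq_bigr => x0 _.
  case: (Hj x0 y0) => H1 H2.
  suff -> : (rel x0 y0 == rel x y) = (rel y0 x0 == j) by [].
  by apply/idP/idP => /eqP H; apply/eqP; [exact: H1 | exact: H2].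
move: tot; rewrite !(sum_val _ x) => /eqP; rewrite eqn_pmul2l.
  by move/eqP=> E; move: (Hval _ _ x Hne); rewrite E eqxx.
by case: x {Hj Hne} => m hm; apply: leq_ltn_trans hm.
Qed.
End S.
Arguments rel0 {n d rel}. Arguments rel_sym {n d rel}. Arguments val_const {n d rel}.

Theorem lemma5p7 (C : numClosedFieldType) (n d : nat)
  (rel : 'I_n -> 'I_n -> 'I_d.+1) (w w' : 'I_d.+1 -> C) :
  is_assoc_scheme rel ->
  type_II (bm_elt rel w) -> type_II (bm_elt rel w') ->
  injective w -> injective w' ->
  (forall (i j : 'I_d.+1) (x : 'I_n), i != j ->
     valency_at rel i x != valency_at rel j x) ->
  (forall (i : 'I_d.+1) (x y : 'I_n), i != ord0 -> rel x y = i ->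
     (n < 2 * pij rel (inord 1) (inord 1) x y)%N) ->
  type_II_equiv (bm_elt rel w) (bm_elt rel w') ->
  exists c : C, bm_elt rel w = c *: bm_elt rel w'.
Proof.
move=> As [HW0 _] [HW0' _] injw injw' Hval Hp [dl [dr [s [t [Hdl [Hdr E]]]]]].
have HW a b : w (rel a b) != 0 by have := HW0 a b; rewrite bm_eltE.
pose tau := (t^-1)%g.
have Ent a b : dl 0 a * w (rel a b) * dr 0 b = w' (rel (s a) (tau b)).
  have := congr1 (fun M : 'M[C]_n => M a b) E.
  rewrite -row_permE -[t]invgK -col_permE mul_mx_diag mul_diag_mx !mxE.
  by rewrite !bm_eltE.
have rsym := rel_sym As Hval.
have Hd a b : dl 0 a = dl 0 b.
  case: (eqVneq a b) => [->//|ab].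
  have ne0 : rel a b != ord0 by rewrite (rel0 As) ab.
  have ne0' : rel (s a) (s b) != ord0 by rewrite (rel0 As) (inj_eq (@perm_inj _ s)) ab.
  have cS := Hp _ a b ne0 erefl.
  have cT0 := Hp _ (s a) (s b) ne0' erefl.
  rewrite /pij in cS cT0.
  set S := [set z | _] in cS.
  set S' := [set z | _] in cT0.
  have cT : #|tau @^-1: S'| = #|S'| by apply: card_preimset; exact: perm_inj.
  have : (0 < #|S :&: tau @^-1: S'|)%N.
    have := cardsUI S (tau @^-1: S'). have := max_card (S :|: tau @^-1: S').
    rewrite card_ord. move: cS cT0 cT; move: #|S :|: _| #|S :&: _| #|S| #|S'| #|tau @^-1: S'| => a1 a2 a3 a4 a5; lia.
  case/card_gt0P => z; rewrite !inE => /andP[/andP[/eqP h1 /eqP h2] /andP[/eqP h3 /eqP h4]].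
  rewrite rsym in h2. rewrite rsym in h4.
  have e1 := Ent a z; have e2 := Ent b z.
  rewrite h1 h3 in e1. rewrite h2 h4 in e2.
  have w1 := HW a z; rewrite h1 in w1.
  have e : dl 0 a * w (inord 1) * dr 0 z = dl 0 b * w (inord 1) * dr 0 z
    by rewrite e1 e2.
  by apply: (mulIf w1); apply: (mulIf (Hdr z)).
case: (pickP (@predT 'I_n)) => [z0 _ | H0]; last first.
  by exists 1; apply/matrixP => x; have := H0 x.
have knz : dl 0 z0 * dr 0 z0 != 0 by rewrite mulf_neq0.
have key i : dl 0 z0 * dr 0 z0 * w i = w' i.
  set v := dl 0 z0 * dr 0 z0 * w i.
  have A1 : #|[set x | w' (rel (s x) (tau z0)) == v]| = valency_at rel i z0.
    rewrite /valency_at; apply: eq_card => x; rewrite !inE -Ent (Hd x z0).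
    by rewrite mulrAC /v (inj_eq (mulfI knz)) (inj_eq injw) rsym.
  have A2 : #|[set x | w' (rel (s x) (tau z0)) == v]| =
            #|[set y | w' (rel y (tau z0)) == v]|.
    rewrite -[RHS](card_preimset _ (@perm_inj _ s)); apply: eq_card => x.
    by rewrite !inE.
  have kpos : (0 < valency_at rel i z0)%N.
    have [Hne _] := As; have [x [y Hxy]] := Hne i.
    rewrite (val_const As i z0 x); apply/card_gt0P; exists y.
    by rewrite inE Hxy.
  case: (pickP (fun j => w' j == v)) => [j /eqP Hj | Hn].
    have A3 : #|[set y | w' (rel y (tau z0)) == v]| = valency_at rel j z0.
      rewrite (val_const As j z0 (tau z0)) /valency_at; apply: eq_card => y.
      by rewrite !inE -Hj (inj_eq injw') rsym.
    case: (eqVneq i j) => [e | ij]; first by rewrite -Hj e.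
    by move: (Hval _ _ z0 ij); rewrite -A1 A2 A3 eqxx.
  have : #|[set y | w' (rel y (tau z0)) == v]| = 0%N.
    by apply/eqP; rewrite cards_eq0; apply/eqP/setP => y; rewrite !inE Hn.
  by rewrite -A2 A1 => h; rewrite h in kpos.
exists (dl 0 z0 * dr 0 z0)^-1; apply/matrixP => x y.
by rewrite mxE !bm_eltE -key mulrA mulVf // mul1r.
Qed.
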